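(* For any formula $A$, the contraction rules $\mathsf{cl}_A$: from $\Gamma,A,A\Rightarrow\Delta$ infer $\Gamma,A\Rightarrow\Delta$, and $\mathsf{cr}_A$: from $\Gamma\Rightarrow A,A,\Delta$ infer $\Gamma\Rightarrow A,\Delta$ (for arbitrary finite multisets $\Gamma,\Delta$) are admissible in $\mathsf{Grz}_\infty$; that is, whenever the premise is provable in $\mathsf{Grz}_\infty$, so is the conclusion.
   Context: Formulas are built from $\bot$ and atomic propositions using $\to$ and $\Box$. A sequent is $\Gamma\Rightarrow\Delta$ with $\Gamma,\Delta$ finite multisets of formulas; $\Box\Pi$ denotes the multiset $\{\Box B:B\in\Pi\}$. The calculus $\mathsf{Grz}_\infty$ (without cut) has initial sequents $\Gamma,p\Rightarrow p,\Delta$ ($p$ atomic) and $\Gamma,\bot\Rightarrow\Delta$, and rules: $(\to_L)$ from $\Gamma,B\Rightarrow\Delta$ and $\Gamma\Rightarrow A,\Delta$ infer $\Gamma,A\to B\Rightarrow\Delta$; $(\to_R)$ from $\Gamma,A\Rightarrow B,\Delta$ infer $\Gamma\Rightarrow A\to B,\Delta$; $(\mathsf{refl})$ from $\Gamma,B,\Box B\Rightarrow\Delta$ infer $\Gamma,\Box B\Rightarrow\Delta$; $(\Box)$ from left premise $\Gamma,\Box\Pi\Rightarrow A,\Delta$ and right premise $\Box\Pi\Rightarrow A$ infer $\Gamma,\Box\Pi\Rightarrow\Box A,\Delta$. An $\infty$-proof is a possibly infinite tree of sequents built by these rules, with leaves labelled by initial sequents, in which every infinite branch passes through a right premise of $(\Box)$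 infinitely often; a sequent is provable if it labels the root of an $\infty$-proof. *)

(* Defs.v *)
From Stdlib Require Import List Permutation Arith.
Import ListNotations.

Inductive form : Type :=
| Bot : form
| Var : nat -> form
| Imp : form -> form -> form
| Box : form -> form.

(* A sequent Gamma => Delta; multisets are represented by lists,
   considered up to permutation (see seq_eq). *)
Definition sequent : Type := (list form * list form)%type.

Definition seq_eq (Sq T : sequent) : Prop :=
  Permutation (fst Sq) (fst T) /\ Permutation (snd Sq) (snd T).

(* Rule names; the premises of RBox are ordered [left; right]. *)
Inductive rname : Type := RInit | RBot | RImpL | RImpR | RRefl | RBox.

Definition rule_ok (r : rname) (Sq : sequent) (Ps : list sequent) : Prop :=
  match r with
  | RInit => Ps = [] /\ exists p, In (Var p) (fst Sq) /\ In (Var p) (snd Sq)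
  | RBot => Ps = [] /\ In Bot (fst Sq)
  | RImpL => exists G D A B S1 S2, Ps = [S1; S2] /\
      seq_eq Sq (Imp A B :: G, D) /\ seq_eq S1 (B :: G, D) /\ seq_eq S2 (G, A :: D)
  | RImpR => exists G D A B S1, Ps = [S1] /\
      seq_eq Sq (G, Imp A B :: D) /\ seq_eq S1 (A :: G, B :: D)
  | RRefl => exists G D B S1, Ps = [S1] /\
      seq_eq Sq (Box B :: G, D) /\ seq_eq S1 (B :: Box B :: G, D)
  | RBox => exists G Pi D A S1 S2, Ps = [S1; S2] /\
      seq_eq Sq (G ++ map Box Pi, Box A :: D) /\
      seq_eq S1 (G ++ map Box Pi, A :: D) /\
      seq_eq S2 (map Box Pi, [A])
  end.

CoInductive ptree : Type :=
| node : sequent -> rname -> list ptree -> ptree.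

Definition pt_seq (t : ptree) : sequent := match t with node Sq _ _ => Sq end.
Definition pt_rule (t : ptree) : rname := match t with node _ r _ => r end.
Definition pt_children (t : ptree) : list ptree :=
  match t with node _ _ ts => ts end.

CoInductive locally_ok : ptree -> Prop :=
| lok : forall Sq r ts,
    rule_ok r Sq (map pt_seq ts) ->
    (forall t, In t ts -> locally_ok t) ->
    locally_ok (node Sq r ts).

Definition is_branch (t : ptree) (b : nat -> ptree) (idx : nat -> nat) : Prop :=
  b 0 = t /\
  forall n, nth_error (pt_children (b n)) (idx n) = Some (b (S n)).

(* Every infinite branch passes through a right premise of (Box) infinitely often. *)
Definition progressing (t : ptree) : Prop :=
  forall b idx, is_branch t b idx ->
    forall n, exists m, n <= m /\ pt_rule (b m) = RBox /\ idx m = 1.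

Definition infty_proof (t : ptree) : Prop := locally_ok t /\ progressing t.

Definition provable (Sq : sequent) : Prop :=
  exists t, infty_proof t /\ pt_seq t = Sq.

(* Main.v *)
Require Import Defs.
From Stdlib Require Import List Permutation Arith Lia Classical ClassicalEpsilon.
Import ListNotations.

Definition isprog (r : rname) (i : nat) : Prop := r = RBox /\ i = 1.

Fixpoint Dn (X : sequent -> Prop) (n : nat) (s : sequent) : Prop :=
  match n with
  | 0 => False
  | Datatypes.S n' => exists r Ps, rule_ok r s Ps /\
      forall i P, nth_error Ps i = Some P ->
        (isprog r i -> X P) /\ (~ isprog r i -> Dn X n' P)
  end.

Definition Dstar X s := exists n, Dn X n s.
Definition Closed (X : sequent -> Prop) := forall s, X s -> Dstar X s.

Lemma Dn_S X n : forall s, Dn X n s -> Dn X (S n) s.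
Proof.
  induction n; simpl; [tauto|].
  intros s [r [Ps [H1 H2]]]. exists r, Ps; split; auto.
  intros i P H; destruct (H2 i P H); split; auto. intro Hp; apply IHn; auto.
Qed.

Lemma Dn_le X n m s : n <= m -> Dn X n s -> Dn X m s.
Proof. induction 1; auto. intro; apply Dn_S; auto. Qed.

Lemma Dn_mono (X Y : sequent -> Prop) n : (forall s, X s -> Y s) -> forall s, Dn X n s -> Dn Y n s.
Proof.
  intros HXY; induction n; simpl; [tauto|].
  intros s [r [Ps [H1 H2]]]. exists r, Ps; split; auto.
  intros i P H; destruct (H2 i P H); split; auto.
Qed.

Lemma Dstar_mono (X Y : sequent -> Prop) : (forall s, X s -> Y s) -> forall s, Dstar X s -> Dstar Y s.
Proof. intros H s [n Hn]; exists n; eapply Dn_mono; eauto. Qed.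

Lemma uniform (Q : nat -> nat -> sequent -> Prop) (Ps : list sequent) :
  (forall n m i P, n <= m -> Q n i P -> Q m i P) ->
  (forall i P, nth_error Ps i = Some P -> exists n, Q n i P) ->
  exists N, forall i P, nth_error Ps i = Some P -> Q N i P.
Proof.
  revert Q; induction Ps as [|a Ps IH]; intros Q Hm H.
  - exists 0; intros [|i] P E; discriminate.
  - destruct (H 0 a eq_refl) as [n0 Hn0].
    destruct (IH (fun n i P => Q n (S i) P)) as [N HN].
    + intros; eapply Hm; eauto.
    + intros i P E; apply (H (S i) P E).
    + exists (max n0 N); intros [|i] P E; simpl in E.
      * injection E as <-; eapply Hm; [|exact Hn0]; lia.
      * eapply Hm; [|exact (HN i P E)]; lia.
Qed.

Lemma D_intro X r s Ps : rule_ok r s Ps ->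
  (forall i P, nth_error Ps i = Some P -> (isprog r i -> X P) /\ (~isprog r i -> Dstar X P)) ->
  Dstar X s.
Proof.
  intros Hr H.
  destruct (uniform (fun n i P => (isprog r i -> X P) /\ (~isprog r i -> Dn X n P)) Ps) as [N HN].
  - intros n m i P Hle [H1 H2]; split; auto. intro; eapply Dn_le; eauto.
  - intros i P E. destruct (H i P E) as [H1 H2]. destruct (classic (isprog r i)) as [Hp|Hp].
    + exists 0; split; auto; tauto.
    + destruct (H2 Hp) as [n Hn]; exists n; split; auto; tauto.
  - exists (S N); simpl; exists r, Ps; split; auto.
Qed.

Lemma D_ind X (Q : sequent -> Prop) :
  (forall s r Ps, rule_ok r s Ps ->
     (forall i P, nth_error Ps i = Some P ->
        (isprog r i -> X P) /\ (~isprog r i -> Dstar X P /\ Q P)) -> Q s) ->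
  forall s, Dstar X s -> Q s.
Proof.
  intros H s [n Hn]; revert s Hn; induction n; simpl; [tauto|].
  intros s [r [Ps [Hr HP]]]. apply (H s r Ps Hr). intros i P E; destruct (HP i P E) as [H1 H2]; split; auto.
  intro Hp; split; [exists n; auto | auto].
Qed.

Definition Spec X (st : sequent * nat) (c : rname * list (sequent * nat)) : Prop :=
  rule_ok (fst c) (fst st) (map fst (snd c)) /\
  forall i q, nth_error (snd c) i = Some q ->
    Dn X (snd q) (fst q) /\ (~ isprog (fst c) i -> snd q < snd st).

Lemma list_choice (Phi : nat -> sequent -> nat -> Prop) (Ps : list sequent) :
  (forall i P, nth_error Ps i = Some P -> exists k, Phi i P k) ->
  exists Qs, map fst Qs = Ps /\ forall i q, nth_error Qs i = Some q -> Phi i (fst q) (snd q).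
Proof.
  revert Phi; induction Ps as [|a Ps IH]; intros Phi H.
  - exists []; split; auto. intros [|i] q E; discriminate.
  - destruct (H 0 a eq_refl) as [k Hk].
    destruct (IH (fun i P k => Phi (S i) P k)) as [Qs [E1 E2]].
    + intros i P E; apply (H (S i) P E).
    + exists ((a,k) :: Qs); split; simpl; [congruence|].
      intros [|i] q E; simpl in E; [injection E as <-; auto | apply E2; auto].
Qed.

Lemma spec_ex X (HC : Closed X) st : Dn X (snd st) (fst st) -> exists c, Spec X st c.
Proof.
  destruct st as [s n]; destruct n; simpl; [tauto|]. intros [r [Ps [Hr HP]]].
  destruct (list_choice (fun i P k => Dn X k P /\ (~ isprog r i -> k < S n)) Ps) as [Qs [E1 E2]].
  - intros i P E. destruct (HP i P E) as [H1 H2]. destruct (classic (isprog r i)) as [Hp|Hp].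
    + destruct (HC P (H1 Hp)) as [k Hk]. exists k; split; auto; tauto.
    + exists n; split; auto.
  - exists (r, Qs); split; simpl; [rewrite E1; auto|]. intros i q E; apply E2; auto.
Qed.

Definition choose X st : rname * list (sequent * nat) :=
  epsilon (inhabits (RInit, [])) (Spec X st).

CoFixpoint build (X : sequent -> Prop) (st : sequent * nat) : ptree :=
  node (fst st) (fst (choose X st))
    (match snd (choose X st) with
     | [q] => [build X q]
     | [q1; q2] => [build X q1; build X q2]
     | _ => [] end).

Definition m2 {A B} (f : A -> B) (l : list A) : list B :=
  match l with [q] => [f q] | [q1; q2] => [f q1; f q2] | _ => [] end.

Lemma m2_map {A B} (f : A -> B) l : length l <= 2 -> m2 f l = map f l.
Proof. destruct l as [|a [|b [|c l]]]; simpl; auto; lia. Qed.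

Lemma rule_len r s Ps : rule_ok r s Ps -> length Ps <= 2.
Proof.
  destruct r; simpl.
  - intros [-> _]; simpl; lia.
  - intros [-> _]; simpl; lia.
  - intros (G & D & A & B & S1 & S2 & -> & _); simpl; lia.
  - intros (G & D & A & B & S1 & -> & _); simpl; lia.
  - intros (G & D & B & S1 & -> & _); simpl; lia.
  - intros (G & Pi & D & A & S1 & S2 & -> & _); simpl; lia.
Qed.

Definition frob t := match t with node a b c => node a b c end.
Lemma frob_eq t : t = frob t. Proof. destruct t; reflexivity. Qed.
Lemma build_unf0 X st : build X st = node (fst st) (fst (choose X st)) (m2 (build X) (snd (choose X st))).
Proof. exact (frob_eq (build X st)). Qed.

Lemma choose_spec X (HC : Closed X) st : Dn X (snd st) (fst st) -> Spec X st (choose X st).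
Proof. intro H; unfold choose; apply epsilon_spec; apply spec_ex; auto. Qed.

Lemma build_unf X (HC : Closed X) st : Dn X (snd st) (fst st) ->
  build X st = node (fst st) (fst (choose X st)) (map (build X) (snd (choose X st))).
Proof.
  intro H. rewrite build_unf0. f_equal. apply m2_map.
  destruct (choose_spec X HC st H) as [Hr _]. apply rule_len in Hr. rewrite length_map in Hr; auto.
Qed.

Lemma build_seq X st : pt_seq (build X st) = fst st.
Proof. rewrite build_unf0; reflexivity. Qed.

Lemma build_lok X (HC : Closed X) : forall st, Dn X (snd st) (fst st) -> locally_ok (build X st).
Proof.
  cofix CIH. intros st H. rewrite (build_unf X HC st H).
  destruct (choose_spec X HC st H) as [Hr Hq].
  constructor.
  - rewrite map_map. erewrite map_ext; [exact Hr|]. intro; apply build_seq.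
  - intros t Ht. apply in_map_iff in Ht as [q [<- Hin]]. apply CIH.
    apply In_nth_error in Hin as [i Hi]. apply (Hq i q Hi).
Qed.

Lemma build_prog X (HC : Closed X) st : Dn X (snd st) (fst st) -> progressing (build X st).
Proof.
  intros H b idx [Hb0 Hbs].
  assert (Hnext : forall st', b = b -> Dn X (snd st') (fst st') -> forall k, b k = build X st' ->
            Spec X st' (choose X st') /\
            pt_rule (b k) = fst (choose X st') /\
            exists q, nth_error (snd (choose X st')) (idx k) = Some q /\ b (S k) = build X q).
  { intros st' _ Hd k E. pose proof (choose_spec X HC st' Hd) as Hs. split; auto.
    rewrite E, (build_unf X HC st' Hd). split; [reflexivity|].
    specialize (Hbs k). rewrite E, (build_unf X HC st' Hd) in Hbs. simpl in Hbs.
    rewrite nth_error_map in Hbs. destruct (nth_error (snd (choose X st')) (idx k)) as [q|]; 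
      inversion Hbs; eauto. }
  assert (Hk : forall k, exists st', b k = build X st' /\ Dn X (snd st') (fst st')).
  { induction k. exists st; auto. destruct IHk as [st' [E Hd]].
    destruct (Hnext st' eq_refl Hd k E) as [[_ Hs] [_ [q [Eq Eb]]]].
    exists q; split; auto. apply (Hs _ _ Eq). }
  assert (Main : forall N k st', b k = build X st' -> Dn X (snd st') (fst st') -> snd st' <= N ->
             exists m, k <= m /\ pt_rule (b m) = RBox /\ idx m = 1).
  { induction N; intros k st' E Hd HN.
    - destruct st' as [s' n']; simpl in *. assert (n' = 0) by lia; subst; simpl in Hd; tauto.
    - destruct (Hnext st' eq_refl Hd k E) as [[_ Hs] [Er [q [Eq Eb]]]].
      destruct (classic (isprog (fst (choose X st')) (idx k))) as [[Hp1 Hp2]|Hp].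
      + exists k; split; auto. rewrite Er; auto.
      + destruct (Hs _ _ Eq) as [Hq1 Hq2]. specialize (Hq2 Hp).
        destruct (IHN (S k) q Eb Hq1 ltac:(lia)) as [m [Hm1 Hm2]]. exists m; split; auto; lia. }
  intro n. destruct (Hk n) as [st' [E Hd]]. apply (Main (snd st') n st'); auto.
Qed.

Lemma closed_prov X : Closed X -> forall s, X s -> provable s.
Proof.
  intros HC s Hs. destruct (HC s Hs) as [n Hn].
  exists (build X (s, n)). split; [split|].
  - apply build_lok; auto.
  - apply build_prog; auto.
  - apply build_seq.
Qed.

Lemma iproof_child t i c : infty_proof t -> nth_error (pt_children t) i = Some c -> infty_proof c.
Proof.
  destruct t as [s r ts]. intros [Hl Hp] E. simpl in E. inversion Hl; subst. split.
  - apply H3. eapply nth_error_In; eauto.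
  - intros b idx [Hb0 Hbs] n.
    set (b' := fun k => match k with 0 => node s r ts | S k => b k end).
    set (idx' := fun k => match k with 0 => i | S k => idx k end).
    assert (Hbr : is_branch (node s r ts) b' idx').
    { split; [reflexivity|]. intros [|k]; simpl. rewrite Hb0; auto. apply Hbs. }
    destruct (Hp b' idx' Hbr (S n)) as [m [Hm1 Hm2]].
    destruct m as [|m]; [lia|]. exists m; split; [lia|exact Hm2].
Qed.

Lemma iproof_D t : infty_proof t -> Dstar provable (pt_seq t).
Proof.
  intros Ht. apply NNPP; intro Hbad.
  set (Pn := fun u (p : ptree * nat) => nth_error (pt_children u) (snd p) = Some (fst p) /\
        ~ isprog (pt_rule u) (snd p) /\ infty_proof (fst p) /\ ~ Dstar provable (pt_seq (fst p))).
  assert (step : forall u, infty_proof u -> ~ Dstar provable (pt_seq u) -> exists p, Pn u p).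
  { intros u Hu Hnd. apply NNPP; intro Hno. apply Hnd. destruct u as [s r ts]. simpl.
    pose proof Hu as [Hl Hp']. inversion Hl; subst.
    apply (D_intro _ r s (map pt_seq ts)); auto. intros i P E.
    rewrite nth_error_map in E. destruct (nth_error ts i) as [c|] eqn:Ec; inversion E; subst.
    assert (Hc : infty_proof c) by (apply (iproof_child _ i c Hu); auto).
    split. { intro; exists c; auto. }
    intro Hnp. apply NNPP; intro HnD. apply Hno. exists (c, i). unfold Pn; simpl; auto. }
  set (nxt := fun u => epsilon (inhabits (u, 0)) (Pn u)).
  set (b := fix b k := match k with 0 => t | S k => fst (nxt (b k)) end).
  set (idx := fun k => snd (nxt (b k))).
  assert (Inv : forall k, infty_proof (b k) /\ ~ Dstar provable (pt_seq (b k)) /\ Pn (b k) (nxt (b k))).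
  { induction k.
    - simpl. split; auto. split; auto. apply epsilon_spec. apply step; auto.
    - destruct IHk as [_ [_ Hp]]. destruct Hp as [_ [_ [H1 H2]]].
      change (b (S k)) with (fst (nxt (b k))). split; auto. split; auto.
      apply epsilon_spec. apply step; auto. }
  destruct Ht as [_ Hprog].
  assert (Hbr : is_branch t b idx).
  { split; [reflexivity|]. intro n. destruct (Inv n) as [_ [_ [E _]]]. exact E. }
  destruct (Hprog b idx Hbr 0) as [m [_ [Hm1 Hm2]]].
  destruct (Inv m) as [_ [_ [_ [Hn _]]]]. apply Hn. split; auto.
Qed.

Lemma prov_D s : provable s -> Dstar provable s.
Proof. intros [t [Ht <-]]; apply iproof_D; auto. Qed.

Lemma D_prov s : Dstar provable s -> provable s.
Proof.
  apply (closed_prov (Dstar provable)). intros s' H. eapply Dstar_mono; [|exact H].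
  apply prov_D.
Qed.

Definition fdec : forall x y : form, {x = y} + {x <> y}.
Proof. decide equality; apply Nat.eq_dec. Defined.

Fixpoint cnt (x : form) (l : list form) : nat :=
  match l with [] => 0 | y :: l => (if fdec y x then 1 else 0) + cnt x l end.

Fixpoint rem1 (a : form) (l : list form) : list form :=
  match l with [] => [] | y :: l => if fdec y a then l else y :: rem1 a l end.

Fixpoint mdiff (l m : list form) : list form :=
  match m with [] => l | a :: m => mdiff (rem1 a l) m end.

Fixpoint fsize (f : form) : nat :=
  match f with Bot => 1 | Var _ => 1 | Imp a b => S (fsize a + fsize b) | Box a => S (fsize a) end.

Lemma cnt_nil x : cnt x [] = 0. Proof. reflexivity. Qed.
Lemma cnt_cons x y l : cnt x (y :: l) = (if fdec y x then 1 else 0) + cnt x l.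
Proof. reflexivity. Qed.
Lemma cnt_app x l m : cnt x (l ++ m) = cnt x l + cnt x m.
Proof. induction l; simpl; auto. rewrite IHl; lia. Qed.
Lemma cnt_rem1 x a l : cnt x (rem1 a l) = cnt x l - (if fdec a x then 1 else 0).
Proof.
  induction l as [|y l IH]; simpl. lia.
  destruct (fdec y a); simpl.
  - subst. destruct (fdec a x); lia.
  - rewrite IH. destruct (fdec y x), (fdec a x); subst; try congruence; lia.
Qed.
Lemma cnt_mdiff x l m : cnt x (mdiff l m) = cnt x l - cnt x m.
Proof.
  revert l; induction m as [|a m IH]; intro l; simpl. lia.
  rewrite IH, cnt_rem1. destruct (fdec a x); lia.
Qed.
Lemma cnt_mapBox_Box y l : cnt (Box y) (map Box l) = cnt y l.
Proof.
  induction l as [|a l IH]; simpl; auto. rewrite IH.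
  destruct (fdec (Box a) (Box y)), (fdec a y); subst; auto; congruence.
Qed.
Lemma cnt_mapBox_Imp a b l : cnt (Imp a b) (map Box l) = 0.
Proof. induction l; simpl; try destruct (fdec _ _); try discriminate; auto. Qed.
Lemma cnt_mapBox_Var p l : cnt (Var p) (map Box l) = 0.
Proof. induction l; simpl; try destruct (fdec _ _); try discriminate; auto. Qed.
Lemma cnt_mapBox_Bot l : cnt Bot (map Box l) = 0.
Proof. induction l; simpl; try destruct (fdec _ _); try discriminate; auto. Qed.
Lemma map_Box_rem1 b l : map Box (rem1 b l) = rem1 (Box b) (map Box l).
Proof.
  induction l as [|a l IH]; simpl; auto.
  destruct (fdec a b), (fdec (Box a) (Box b)); subst; simpl; try congruence.
Qed.

Lemma cnt_count x l : cnt x l = count_occ fdec l x.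
Proof. induction l as [|y l IH]; simpl; auto. destruct (fdec y x); simpl; lia. Qed.

Lemma perm_cnt l1 l2 : Permutation l1 l2 <-> forall x, cnt x l1 = cnt x l2.
Proof.
  rewrite (Permutation_count_occ fdec). split; intros H x; rewrite ?cnt_count in *; auto.
  specialize (H x); rewrite !cnt_count in H; auto.
Qed.

Lemma In_cnt x l : In x l <-> cnt x l > 0.
Proof.
  induction l as [|y l IH]; simpl. split; [tauto|lia].
  destruct (fdec y x); split; intros; try lia; auto.
  destruct H; [congruence|]. apply IH in H; lia.
  right; apply IH; lia.
Qed.

Lemma seq_cnt s G D : seq_eq s (G, D) ->
  (forall x, cnt x (fst s) = cnt x G) /\ (forall x, cnt x (snd s) = cnt x D).
Proof. intros [H1 H2]; simpl in *; split; apply perm_cnt; auto. Qed.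

Lemma cnt_seq s G D : (forall x, cnt x (fst s) = cnt x G) -> (forall x, cnt x (snd s) = cnt x D) ->
  seq_eq s (G, D).
Proof. intros H1 H2; split; simpl; apply perm_cnt; auto. Qed.

Global Opaque cnt fdec.

Ltac cnt_rw := cbn [fst snd] in *;
  rewrite ?map_Box_rem1 in *;
  rewrite ?cnt_app, ?cnt_rem1, ?cnt_mdiff, ?cnt_nil, ?cnt_cons, ?cnt_mapBox_Box,
    ?cnt_mapBox_Imp, ?cnt_mapBox_Var, ?cnt_mapBox_Bot in *.

Ltac dec_all := repeat match goal with
  | |- context [fdec ?a ?b] => destruct (fdec a b)
  | H : context [fdec ?a ?b] |- _ => destruct (fdec a b)
  end.

Ltac clean := repeat match goal with
  | H : @eq form ?a ?b |- _ =>
      first [ discriminate H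
            | (assert (fsize a = fsize b) by (rewrite H; reflexivity); simpl in *; lia)
            | subst b | subst a
            | (injection H; clear H; intros) ]
  end.

Ltac dc := repeat (first [progress clean | progress cnt_rw |
   match goal with |- context [fdec ?a ?b] => destruct (fdec a b)
   | H : context [fdec ?a ?b] |- _ => destruct (fdec a b) end]).

Ltac csolve1 :=
  cnt_rw; dc; try (exfalso; congruence); lia.

Ltac csolve := let x := fresh "x" in intro x;
  repeat match goal with H : forall y : form, _ |- _ => specialize (H x) end;
  csolve1.

Lemma test a b G : forall x, cnt x (Imp a b :: G) = cnt x (G ++ [Imp a b]).
Proof. csolve. Qed.

Definition RelK (L R L' R' : list form) (s s' : sequent) : Prop :=
  (forall x, cnt x L <= cnt x (fst s)) /\ (forall x, cnt x R <= cnt x (snd s)) /\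
  (forall x, cnt x (fst s) + cnt x L' = cnt x (fst s') + cnt x L) /\
  (forall x, cnt x (snd s) + cnt x R' = cnt x (snd s') + cnt x R).

Definition Step (Rel : sequent -> sequent -> Prop) (s' : sequent) (r : rname) (Ps : list sequent) :=
  provable s' \/ exists r' Ps', rule_ok r' s' Ps' /\
    forall i P', nth_error Ps' i = Some P' -> provable P' \/
      exists j P, nth_error Ps j = Some P /\ Rel P P' /\ (isprog r j -> isprog r' i).

Lemma sim (Rel : sequent -> sequent -> Prop) :
  (forall s s' r Ps, Rel s s' -> rule_ok r s Ps -> (forall i P, nth_error Ps i = Some P -> provable P) ->
     Step Rel s' r Ps) ->
  forall s s', provable s -> Rel s s' -> provable s'.
Proof.
  intros H.
  set (X' := fun T => provable T \/ exists s, provable s /\ Rel s T).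
  assert (Main : forall s, Dstar provable s -> forall s', Rel s s' -> Dstar X' s').
  { apply (D_ind provable (fun s => forall s', Rel s s' -> Dstar X' s')).
    intros s r Ps Hr HP s' Hrel.
    assert (Hprov : forall i P, nth_error Ps i = Some P -> provable P).
    { intros i P E. destruct (HP i P E) as [H1 H2]. destruct (classic (isprog r i)) as [Hp|Hp]; auto.
      apply D_prov; apply H2; auto. }
    destruct (H s s' r Ps Hrel Hr Hprov) as [Hs'|[r' [Ps' [Hr' HC]]]].
    - eapply Dstar_mono; [|apply prov_D; exact Hs']. unfold X'; auto.
    - apply (D_intro X' r' s' Ps' Hr'). intros i P' E. destruct (HC i P' E) as [Hp|[j [P [Ej [Hrl Hpj]]]]].
      + split. intro; left; auto. intro. eapply Dstar_mono; [|apply prov_D; exact Hp]. unfold X'; auto.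
      + split. intro; right; exists P; split; eauto.
        intro Hnp. destruct (HP j P Ej) as [_ H2]. apply H2; auto. }
  intros s s' Hs Hrel. apply (closed_prov X').
  - intros T [HT|[s0 [Hs0 Hr0]]].
    + eapply Dstar_mono; [|apply prov_D; exact HT]. unfold X'; auto.
    + apply (Main s0); auto. apply prov_D; auto.
  - right; eauto.
Qed.

Lemma seq_eq_trans a b c : seq_eq a b -> seq_eq b c -> seq_eq a c.
Proof. intros [H1 H2] [H3 H4]; split; eapply Permutation_trans; eauto. Qed.
Lemma seq_eq_sym a b : seq_eq a b -> seq_eq b a.
Proof. intros [H1 H2]; split; apply Permutation_sym; auto. Qed.
Lemma seq_eq_refl a : seq_eq a a.
Proof. split; apply Permutation_refl. Qed.

Lemma rule_ok_perm r s s' Ps : seq_eq s s' -> rule_ok r s Ps -> rule_ok r s' Ps.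
Proof.
  intros E. pose proof (seq_eq_sym _ _ E) as E'. destruct r; simpl.
  - intros [-> [p [H1 H2]]]; split; auto; exists p; destruct E as [E1 E2];
      split; eapply Permutation_in; eauto.
  - intros [-> H1]; split; auto; destruct E as [E1 E2]; eapply Permutation_in; eauto.
  - intros (G & D & A & B & S1 & S2 & ? & ? & ? & ?). exists G, D, A, B, S1, S2.
    split; [auto|]; split; [eapply seq_eq_trans; eauto|]; tauto.
  - intros (G & D & A & B & S1 & ? & ? & ?). exists G, D, A, B, S1.
    split; [auto|]; split; [eapply seq_eq_trans; eauto|]; tauto.
  - intros (G & D & B & S1 & ? & ? & ?). exists G, D, B, S1.
    split; [auto|]; split; [eapply seq_eq_trans; eauto|]; tauto.
  - intros (G & Pi & D & A & S1 & S2 & ? & ? & ? & ?). exists G, Pi, D, A, S1, S2.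
    split; [auto|]; split; [eapply seq_eq_trans; eauto|]; tauto.
Qed.

Lemma prov_perm s s' : provable s -> seq_eq s s' -> provable s'.
Proof.
  intros H E. apply prov_D in H. destruct H as [n Hn]. apply D_prov. exists n.
  destruct n; simpl in *; auto. destruct Hn as [r [Ps [Hr HP]]]. exists r, Ps; split; auto.
  eapply rule_ok_perm; eauto.
Qed.

Lemma rule_prov r s Ps : rule_ok r s Ps -> (forall i P, nth_error Ps i = Some P -> provable P) -> provable s.
Proof.
  intros Hr H. apply D_prov. apply (D_intro provable r s Ps Hr). intros i P E; split; [intro; eauto| intro; apply prov_D; eauto].
Qed.

Ltac seqs_to_cnt := repeat match goal with
  | H : seq_eq _ (_, _) |- _ => apply seq_cnt in H; destruct H
  end.

Ltac solve_seq := apply cnt_seq; csolve.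

Ltac solve_rel := unfold RelK in *; repeat match goal with H : _ /\ _ |- _ => destruct H end;
  repeat split; csolve.

Lemma np_ImpL L R L' R' s s' A B G D S1 S2 :
  RelK L R L' R' s s' ->
  seq_eq s (Imp A B :: G, D) -> seq_eq S1 (B :: G, D) -> seq_eq S2 (G, A :: D) ->
  cnt (Imp A B) L < cnt (Imp A B) (fst s) ->
  Step (RelK L R L' R') s' RImpL [S1; S2].
Proof.
  intros Hrel Hs H1 H2 Hc. right.
  exists RImpL, [(B :: rem1 (Imp A B) (fst s'), snd s'); (rem1 (Imp A B) (fst s'), A :: snd s')].
  seqs_to_cnt. destruct Hrel as (? & ? & ? & ?).
  split.
  - exists (rem1 (Imp A B) (fst s')), (snd s'), A, B, (B :: rem1 (Imp A B) (fst s'), snd s'), (rem1 (Imp A B) (fst s'), A :: snd s'). split; [reflexivity|].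
    split; [|split; apply seq_eq_refl].
    solve_seq.
  - intros [|[|[]]] P' E; simpl in E; inversion E; subst; right.
    + exists 0, S1; split; [reflexivity|]. split; [|intros [? ?]; discriminate].
      solve_rel.
    + exists 1, S2; split; [reflexivity|]. split; [|intros [? ?]; discriminate].
      solve_rel.
Qed.

Lemma np_ImpR L R L' R' s s' A B G D S1 :
  RelK L R L' R' s s' ->
  seq_eq s (G, Imp A B :: D) -> seq_eq S1 (A :: G, B :: D) ->
  cnt (Imp A B) R < cnt (Imp A B) (snd s) ->
  Step (RelK L R L' R') s' RImpR [S1].
Proof.
  intros Hrel Hs H1 Hc. right.
  exists RImpR, [(A :: fst s', B :: rem1 (Imp A B) (snd s'))].
  seqs_to_cnt. destruct Hrel as (? & ? & ? & ?).
  split.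
  - exists (fst s'), (rem1 (Imp A B) (snd s')), A, B, (A :: fst s', B :: rem1 (Imp A B) (snd s')).
    split; [reflexivity|]. split; [|apply seq_eq_refl]. solve_seq.
  - intros [|[]] P' E; simpl in E; inversion E; subst; right.
    exists 0, S1; split; [reflexivity|]. split; [|intros [? ?]; discriminate].
    solve_rel.
Qed.

Lemma np_Refl L R L' R' s s' B G D S1 :
  RelK L R L' R' s s' ->
  seq_eq s (Box B :: G, D) -> seq_eq S1 (B :: Box B :: G, D) ->
  cnt (Box B) (fst s') > 0 ->
  Step (RelK L R L' R') s' RRefl [S1].
Proof.
  intros Hrel Hs H1 Hc. right.
  exists RRefl, [(B :: Box B :: rem1 (Box B) (fst s'), snd s')].
  seqs_to_cnt. destruct Hrel as (? & ? & ? & ?).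
  split.
  - exists (rem1 (Box B) (fst s')), (snd s'), B, (B :: Box B :: rem1 (Box B) (fst s'), snd s').
    split; [reflexivity|]. split; [|apply seq_eq_refl]. solve_seq.
  - intros [|[]] P' E; simpl in E; inversion E; subst; right.
    exists 0, S1; split; [reflexivity|]. split; [|intros [? ?]; discriminate].
    solve_rel.
Qed.

Lemma np_Box L R L' R' s s' G Pi D A S1 S2 :
  RelK L R L' R' s s' ->
  seq_eq s (G ++ map Box Pi, Box A :: D) -> seq_eq S1 (G ++ map Box Pi, A :: D) ->
  seq_eq S2 (map Box Pi, [A]) -> provable S2 ->
  (forall x, cnt x L <= cnt x G) ->
  cnt (Box A) R < cnt (Box A) (snd s) ->
  Step (RelK L R L' R') s' RBox [S1; S2].
Proof.
  intros Hrel Hs H1 H2 HS2 HLG Hc. right.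
  exists RBox, [(mdiff (fst s') (map Box Pi) ++ map Box Pi, A :: rem1 (Box A) (snd s')); S2].
  split.
  - exists (mdiff (fst s') (map Box Pi)), Pi, (rem1 (Box A) (snd s')), A,
      (mdiff (fst s') (map Box Pi) ++ map Box Pi, A :: rem1 (Box A) (snd s')), S2.
    split; [reflexivity|]. split; [|split; [apply seq_eq_refl|exact H2]].
    seqs_to_cnt. destruct Hrel as (? & ? & ? & ?). solve_seq.
  - intros [|[|[]]] P' E; simpl in E; inversion E; subst.
    + right. exists 0, S1; split; [reflexivity|]. split; [|intros [? ?]; discriminate].
      seqs_to_cnt. solve_rel.
    + left; auto.
Qed.

Lemma np_Init (Rel : sequent -> sequent -> Prop) s' p Ps :
  In (Var p) (fst s') -> In (Var p) (snd s') -> Step Rel s' RInit Ps.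
Proof.
  intros H1 H2. right. exists RInit, []. split.
  - split; auto. exists p; auto.
  - intros [|i] P' E; discriminate.
Qed.

Lemma np_Bot (Rel : sequent -> sequent -> Prop) s' Ps :
  In Bot (fst s') -> Step Rel s' RBot Ps.
Proof.
  intros H1. right. exists RBot, []. split.
  - split; auto.
  - intros [|i] P' E; discriminate.
Qed.

Lemma Step_gen L R L' R' s s' r Ps :
  RelK L R L' R' s s' -> rule_ok r s Ps -> (forall i P, nth_error Ps i = Some P -> provable P) ->
  (forall p, In (Var p) (fst s) -> In (Var p) (snd s) -> In (Var p) (fst s') /\ In (Var p) (snd s')) ->
  (In Bot (fst s) -> In Bot (fst s')) ->
  (forall B, cnt (Box B) (fst s) > 0 -> cnt (Box B) (fst s') > 0) ->
  (forall A B G D S1 S2, Ps = [S1; S2] -> seq_eq s (Imp A B :: G, D) -> seq_eq S1 (B :: G, D) ->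
     seq_eq S2 (G, A :: D) -> cnt (Imp A B) (fst s) <= cnt (Imp A B) L ->
     Step (RelK L R L' R') s' r Ps) ->
  (forall A B G D S1, Ps = [S1] -> seq_eq s (G, Imp A B :: D) -> seq_eq S1 (A :: G, B :: D) ->
     cnt (Imp A B) (snd s) <= cnt (Imp A B) R ->
     Step (RelK L R L' R') s' r Ps) ->
  (forall G Pi D A S1 S2, Ps = [S1; S2] -> seq_eq s (G ++ map Box Pi, Box A :: D) ->
     seq_eq S1 (G ++ map Box Pi, A :: D) -> seq_eq S2 (map Box Pi, [A]) ->
     ((exists x, cnt x G < cnt x L) \/ cnt (Box A) (snd s) <= cnt (Box A) R) ->
     Step (RelK L R L' R') s' r Ps) ->
  Step (RelK L R L' R') s' r Ps.
Proof.
  intros Hrel Hr Hprov HI HB HRf HL HR HBx.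
  destruct r; simpl in Hr.
  - destruct Hr as [-> [p [H1 H2]]]. destruct (HI p H1 H2). eapply np_Init; eauto.
  - destruct Hr as [-> H1]. apply np_Bot; auto.
  - destruct Hr as (G & D & A & B & S1 & S2 & -> & Hs & H1 & H2).
    destruct (le_lt_dec (cnt (Imp A B) (fst s)) (cnt (Imp A B) L)).
    + eapply HL; eauto.
    + eapply np_ImpL; eauto.
  - destruct Hr as (G & D & A & B & S1 & -> & Hs & H1).
    destruct (le_lt_dec (cnt (Imp A B) (snd s)) (cnt (Imp A B) R)).
    + eapply HR; eauto.
    + eapply np_ImpR; eauto.
  - destruct Hr as (G & D & B & S1 & -> & Hs & H1).
    eapply np_Refl; eauto. apply HRf. apply seq_cnt in Hs. destruct Hs as [Hs _].
    rewrite Hs, cnt_cons. dc; try (exfalso; congruence); lia.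
  - destruct Hr as (G & Pi & D & A & S1 & S2 & -> & Hs & H1 & H2).
    destruct (classic ((exists x, cnt x G < cnt x L) \/ cnt (Box A) (snd s) <= cnt (Box A) R)) as [Hc|Hc].
    + eapply HBx; eauto.
    + apply not_or_and in Hc. destruct Hc as [Hc1 Hc2].
      eapply np_Box; eauto.
      * apply (Hprov 1); reflexivity.
      * intro x. destruct (le_lt_dec (cnt x L) (cnt x G)); auto. exfalso; apply Hc1; eauto.
      * lia.
Qed.

Lemma cnt_seq2 s t : (forall x, cnt x (fst s) = cnt x (fst t)) -> (forall x, cnt x (snd s) = cnt x (snd t)) ->
  seq_eq s t.
Proof. intros H1 H2; split; apply perm_cnt; auto. Qed.

Ltac destr_rel := match goal with H : RelK _ _ _ _ _ _ |- _ => destruct H as (?&?&?&?) end.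
Ltac at_ f := repeat match goal with H : forall y : form, _ |- _ => specialize (H f) end.
Ltac fin := cnt_rw; dc; try (exfalso; congruence); lia.

Ltac h_init := intros ?p ?H1 ?H2; rewrite !In_cnt in *; destr_rel;
  match goal with |- cnt (Var ?p) _ > 0 /\ _ => at_ (Var p) end; split; fin.
Ltac h_bot := intros ?H1; rewrite !In_cnt in *; destr_rel; at_ Bot; fin.
Ltac h_refl := intros ?B ?H1; destr_rel; match goal with |- cnt (Box ?B) _ > 0 => at_ (Box B) end; fin.
Ltac h_impl := intros ?A ?B ?G ?D ?S1 ?S2 ?E ?Hs ?H1 ?H2 ?Hc; exfalso; seqs_to_cnt; destr_rel;
  match type of Hc with cnt ?f _ <= _ => at_ f end; fin.
Ltac h_impr := intros ?A ?B ?G ?D ?S1 ?E ?Hs ?H1 ?Hc; exfalso; seqs_to_cnt; destr_rel;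
  match type of Hc with cnt ?f _ <= _ => at_ f end; fin.
Ltac h_box := intros ?G ?Pi ?D ?A ?S1 ?S2 ?E ?Hs ?H1 ?H2 [[?x ?Hx]|?Hc]; exfalso; seqs_to_cnt; destr_rel;
  [ at_ x | match goal with Hc : cnt ?f _ <= _ |- _ => at_ f end ]; fin.

Lemma weakening s s' : provable s ->
  (forall x, cnt x (fst s) <= cnt x (fst s')) -> (forall x, cnt x (snd s) <= cnt x (snd s')) ->
  provable s'.
Proof.
  intros Hs H1 H2.
  apply (sim (RelK [] [] (mdiff (fst s') (fst s)) (mdiff (snd s') (snd s))) ) with s; auto.
  2: { repeat split; csolve. }
  clear. intros a a' r Ps Hrel Hr Hprov.
  apply (Step_gen _ _ _ _ a a' r Ps Hrel Hr Hprov).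
  - h_init.
  - h_bot.
  - h_refl.
  - h_impl.
  - h_impr.
  - h_box.
Qed.

Lemma invR A B G D : provable (G, Imp A B :: D) -> provable (A :: G, B :: D).
Proof.
  intro Hs.
  apply (sim (RelK [] [Imp A B] [A] [B])) with (G, Imp A B :: D); auto.
  2: { repeat split; csolve. }
  clear. intros a a' r Ps Hrel Hr Hprov.
  apply (Step_gen _ _ _ _ a a' r Ps Hrel Hr Hprov).
  - h_init.
  - h_bot.
  - h_refl.
  - h_impl.
  - intros A0 B0 G0 D0 S1 E Hs H1 Hc. subst Ps. left.
    apply prov_perm with S1; [apply (Hprov 0); reflexivity|].
    destruct (fdec (Imp A0 B0) (Imp A B)) as [e|ne].
    + injection e; intros; subst. seqs_to_cnt; destr_rel; apply cnt_seq2; csolve.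
    + exfalso; seqs_to_cnt; destr_rel; at_ (Imp A0 B0); fin.
  - h_box.
Qed.

Lemma invL1 A B G D : provable (Imp A B :: G, D) -> provable (B :: G, D).
Proof.
  intro Hs.
  apply (sim (RelK [Imp A B] [] [B] [])) with (Imp A B :: G, D); auto.
  2: { repeat split; csolve. }
  clear. intros a a' r Ps Hrel Hr Hprov.
  apply (Step_gen _ _ _ _ a a' r Ps Hrel Hr Hprov).
  - h_init.
  - h_bot.
  - h_refl.
  - intros A0 B0 G0 D0 S1 S2 E Hs H1 H2 Hc. subst Ps. left.
    apply prov_perm with S1; [apply (Hprov 0); reflexivity|].
    destruct (fdec (Imp A0 B0) (Imp A B)) as [e|ne].
    + injection e; intros; subst. seqs_to_cnt; destr_rel; apply cnt_seq2; csolve.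
    + exfalso; seqs_to_cnt; destr_rel; at_ (Imp A0 B0); fin.
  - h_impr.
  - h_box.
Qed.

Lemma invL2 A B G D : provable (Imp A B :: G, D) -> provable (G, A :: D).
Proof.
  intro Hs.
  apply (sim (RelK [Imp A B] [] [] [A])) with (Imp A B :: G, D); auto.
  2: { repeat split; csolve. }
  clear. intros a a' r Ps Hrel Hr Hprov.
  apply (Step_gen _ _ _ _ a a' r Ps Hrel Hr Hprov).
  - h_init.
  - h_bot.
  - h_refl.
  - intros A0 B0 G0 D0 S1 S2 E Hs H1 H2 Hc. subst Ps. left.
    apply prov_perm with S2; [apply (Hprov 1); reflexivity|].
    destruct (fdec (Imp A0 B0) (Imp A B)) as [e|ne].
    + injection e; intros; subst. seqs_to_cnt; destr_rel; apply cnt_seq2; csolve.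
    + exfalso; seqs_to_cnt; destr_rel; at_ (Imp A0 B0); fin.
  - h_impr.
  - h_box.
Qed.

Lemma cl_var p G D : provable (Var p :: Var p :: G, D) -> provable (Var p :: G, D).
Proof.
  intro Hs.
  apply (sim (RelK [Var p; Var p] [] [Var p] [])) with (Var p :: Var p :: G, D); auto.
  2: { repeat split; csolve. }
  clear. intros a a' r Ps Hrel Hr Hprov.
  apply (Step_gen _ _ _ _ a a' r Ps Hrel Hr Hprov).
  - h_init.
  - h_bot.
  - h_refl.
  - h_impl.
  - h_impr.
  - h_box.
Qed.

Lemma cr_var p G D : provable (G, Var p :: Var p :: D) -> provable (G, Var p :: D).
Proof.
  intro Hs.
  apply (sim (RelK [] [Var p; Var p] [] [Var p])) with (G, Var p :: Var p :: D); auto.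
  2: { repeat split; csolve. }
  clear. intros a a' r Ps Hrel Hr Hprov.
  apply (Step_gen _ _ _ _ a a' r Ps Hrel Hr Hprov).
  - h_init.
  - h_bot.
  - h_refl.
  - h_impl.
  - h_impr.
  - h_box.
Qed.

Lemma cr_bot G D : provable (G, Bot :: Bot :: D) -> provable (G, Bot :: D).
Proof.
  intro Hs.
  apply (sim (RelK [] [Bot; Bot] [] [Bot])) with (G, Bot :: Bot :: D); auto.
  2: { repeat split; csolve. }
  clear. intros a a' r Ps Hrel Hr Hprov.
  apply (Step_gen _ _ _ _ a a' r Ps Hrel Hr Hprov).
  - h_init.
  - h_bot.
  - h_refl.
  - h_impl.
  - h_impr.
  - h_box.
Qed.

Lemma cl_box B G D : provable (Box B :: Box B :: G, D) -> provable (Box B :: G, D).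
Proof.
  intro Hs.
  apply (sim (RelK [Box B; Box B] [] [Box B] [])) with (Box B :: Box B :: G, D); auto.
  2: { repeat split; csolve. }
  clear. intros a a' r Ps Hrel Hr Hprov.
  apply (Step_gen _ _ _ _ a a' r Ps Hrel Hr Hprov).
  - h_init.
  - h_bot.
  - h_refl.
  - h_impl.
  - h_impr.
  - intros G0 Pi D0 A S1 S2 E Hs H1 H2 _. subst Ps. right.
    destruct (le_lt_dec 2 (cnt B Pi)) as [Hge|Hlt].
    + exists RBox, [(mdiff (fst a') (map Box (rem1 B Pi)) ++ map Box (rem1 B Pi), A :: rem1 (Box A) (snd a'));
                    (map Box (rem1 B Pi), [A])].
      split.
      * exists (mdiff (fst a') (map Box (rem1 B Pi))), (rem1 B Pi), (rem1 (Box A) (snd a')), A,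
          (mdiff (fst a') (map Box (rem1 B Pi)) ++ map Box (rem1 B Pi), A :: rem1 (Box A) (snd a')),
          (map Box (rem1 B Pi), [A]).
        split; [reflexivity|]. split; [|split; apply seq_eq_refl].
        seqs_to_cnt; destr_rel; solve_seq.
      * intros [|[|[]]] P' E; simpl in E; inversion E; subst; right.
        -- exists 0, S1; split; [reflexivity|]. split; [|intros [? ?]; discriminate].
           seqs_to_cnt; solve_rel.
        -- exists 1, S2; split; [reflexivity|]. split; [|intros _; split; reflexivity].
           seqs_to_cnt; solve_rel.
    + exists RBox, [(mdiff (fst a') (map Box Pi) ++ map Box Pi, A :: rem1 (Box A) (snd a')); S2].
      split.
      * exists (mdiff (fst a') (map Box Pi)), Pi, (rem1 (Box A) (snd a')), A,
          (mdiff (fst a') (map Box Pi) ++ map Box Pi, A :: rem1 (Box A) (snd a')), S2.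
        split; [reflexivity|]. split; [|split; [apply seq_eq_refl|exact H2]].
        seqs_to_cnt; destr_rel; solve_seq.
      * intros [|[|[]]] P' E; simpl in E; inversion E; subst.
        -- right. exists 0, S1; split; [reflexivity|]. split; [|intros [? ?]; discriminate].
           seqs_to_cnt; solve_rel.
        -- left. apply (Hprov 1); reflexivity.
Qed.

Lemma cr_box B G D : provable (G, Box B :: Box B :: D) -> provable (G, Box B :: D).
Proof.
  intro Hs.
  apply (sim (RelK [] [Box B; Box B] [] [Box B])) with (G, Box B :: Box B :: D); auto.
  2: { repeat split; csolve. }
  clear. intros a a' r Ps Hrel Hr Hprov.
  apply (Step_gen _ _ _ _ a a' r Ps Hrel Hr Hprov).
  - h_init.
  - h_bot.
  - h_refl.
  - h_impl.
  - h_impr.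
  - intros G0 Pi D0 A S1 S2 E Hs H1 H2 [[x Hx]|Hc].
    { exfalso; seqs_to_cnt; destr_rel; at_ x; fin. }
    destruct (fdec A B) as [e|ne].
    2: { exfalso; seqs_to_cnt; destr_rel; at_ (Box A); fin. }
    subst A Ps. right.
    exists RBox, [(mdiff (fst a') (map Box Pi) ++ map Box Pi, B :: rem1 (Box B) (snd a')); S2].
    split.
    + exists (mdiff (fst a') (map Box Pi)), Pi, (rem1 (Box B) (snd a')), B,
        (mdiff (fst a') (map Box Pi) ++ map Box Pi, B :: rem1 (Box B) (snd a')), S2.
      split; [reflexivity|]. split; [|split; [apply seq_eq_refl|exact H2]].
      seqs_to_cnt; destr_rel; solve_seq.
    + intros [|[|[]]] P' E; simpl in E; inversion E; subst; left.
      * apply weakening with S2; [apply (Hprov 1); reflexivity| |];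
          seqs_to_cnt; destr_rel; csolve.
      * apply (Hprov 1); reflexivity.
Qed.

Theorem lemma8p2 : forall (A : form) (G D : list form),
  (provable (A :: A :: G, D) -> provable (A :: G, D)) /\
  (provable (G, A :: A :: D) -> provable (G, A :: D)).
Proof.
  induction A as [|p|A1 IH1 A2 IH2|B IHB]; intros G D; split; intro H.
  - apply (rule_prov RBot (Bot :: G, D) []); [split; [reflexivity| simpl; auto]|].
    intros [|i] P E; discriminate.
  - apply cr_bot; auto.
  - apply cl_var; auto.
  - apply cr_var; auto.
  - assert (H1 : provable (A2 :: G, D)).
    { apply invL1 in H. apply (prov_perm _ (Imp A1 A2 :: A2 :: G, D)) in H; [|apply cnt_seq2; csolve].
      apply invL1 in H. apply (IH2 G D); auto. }
    assert (H2 : provable (G, A1 :: D)).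
    { apply invL2 in H. apply invL2 in H. apply (IH1 G D); auto. }
    apply (rule_prov RImpL (Imp A1 A2 :: G, D) [(A2 :: G, D); (G, A1 :: D)]).
    + exists G, D, A1, A2, (A2 :: G, D), (G, A1 :: D). split; [reflexivity|].
      split; [apply seq_eq_refl|split; apply seq_eq_refl].
    + intros [|[|[]]] P E; simpl in E; inversion E; subst; auto.
  - apply invR in H. apply (prov_perm _ (A1 :: G, Imp A1 A2 :: A2 :: D)) in H; [|apply cnt_seq2; csolve].
    apply invR in H. apply (IH1 G (A2 :: A2 :: D)) in H. apply (IH2 (A1 :: G) D) in H.
    apply (rule_prov RImpR (G, Imp A1 A2 :: D) [(A1 :: G, A2 :: D)]).
    + exists G, D, A1, A2, (A1 :: G, A2 :: D). split; [reflexivity|].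
      split; apply seq_eq_refl.
    + intros [|[]] P E; simpl in E; inversion E; subst; auto.
  - apply cl_box; auto.
  - apply cr_box; auto.
Qed.
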